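(* For $n,i\in\mathbb{N}=\{1,2,\dots\}$, $$\int_{-\infty}^{\infty}\frac{|t|^i}{i!}|h_n(t)|\,dt\le\frac{1}{\sqrt{2^n\,n!\,i!\,\sqrt{\pi}}}.$$
   Context: $H_n$ denotes the $n$-th Hermite polynomial ($H_n(t)=(-1)^ne^{t^2}\frac{d^n}{dt^n}e^{-t^2}$, so $H_0=1$, $H_1(t)=2t$, $H_2(t)=4t^2-2$), and the Hermite functions are $h_n(t)=\frac{1}{2^nn!\sqrt{\pi}}e^{-t^2}H_n(t)$, $t\in\mathbb{R}$. *)

(* Defs.v *)
From HB Require Import structures.
From mathcomp Require Import all_boot all_order all_algebra.
From mathcomp Require Import all_classical all_reals all_analysis.
Set Implicit Arguments. Unset Strict Implicit. Unset Printing Implicit Defensive.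
Import Order.TTheory GRing.Theory Num.Theory.
Local Open Scope ring_scope.

Definition hermiteH (R : realType) (n : nat) (t : R) : R :=
  (-1) ^+ n * expR (t ^+ 2) * derive1n n (fun s : R => expR (- s ^+ 2)) t.

Definition hermite_fun (R : realType) (n : nat) (t : R) : R :=
  expR (- t ^+ 2) * hermiteH n t / (2 ^+ n * n`!%:R * Num.sqrt pi).

(* Main.v *)
Require Import Defs.
From HB Require Import structures.
From mathcomp Require Import all_boot all_order all_algebra.
From mathcomp Require Import all_classical all_reals all_analysis.
From mathcomp Require Import ring lra measurable_realfun.
Import Order.TTheory GRing.Theory Num.Theory.
Import numFieldNormedType.Exports.
Local Open Scope ring_scope.
Section S.
Context {R : realType}.

Lemma is_derive_gauss (x : R) :
  is_derive x 1 (fun s : R => expR (- s ^+ 2)) (- (x *+ 2) * expR (- x ^+ 2)).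
Proof.
have h1 : is_derive x 1 (fun s : R => - s ^+ 2) (- (x *+ 2)).
  by apply: is_derive_eq; rewrite /GRing.scale /= mulr1 -mulr2n.
have := @is_derive1_comp R expR (fun s : R => - s ^+ 2) x _ _ (is_derive_expR _) h1.
by rewrite mulrC.
Qed.

Lemma is_derive_pg (p : {poly R}) (x : R) :
  is_derive x 1 (fun s : R => p.[s] * expR (- s ^+ 2))
    ((p^`() - p * 'X *+ 2).[x] * expR (- x ^+ 2)).
Proof.
have := @is_deriveM R R (horner p) (fun s : R => expR (- s ^+ 2)) x 1 _ _ _ (is_derive_gauss x).
move=> H; apply: is_derive_eq.
have key : forall q d e x : R, q *: (x *- 2 * e) + e *: d = (d - (q * x + q * x)) * e.
  by move=> q d e y; rewrite /GRing.scale /=; ring.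
by rewrite !hornerE; apply: key.
Qed.

Fixpoint rp (n : nat) : {poly R} :=
  if n is m.+1 then (rp m)^`() - rp m * 'X *+ 2 else 1.

Lemma size_rp n : (size (rp n) <= n.+1)%N.
Proof.
elim: n => [|n IH] /=; first by rewrite size_poly1.
apply: leq_trans (size_polyD _ _) _; rewrite size_polyN geq_max; apply/andP; split.
  have [->|p0] := eqVneq (rp n) 0; first by rewrite deriv0 size_poly0.
  by apply: leq_trans (ltnW (lt_size_deriv p0)) _; apply: leq_trans IH _.
rewrite mulr2n; apply: leq_trans (size_polyD _ _) _; rewrite maxnn.
have [->|p0] := eqVneq (rp n) 0; first by rewrite mul0r size_poly0.
by rewrite size_mulX.
Qed.

Lemma derivn_rp n : (rp n)^`(n) = ((-2) ^+ n * n`!%:R)%:P.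
Proof.
elim: n => [|n IH]; first by rewrite derivn0 /= expr0 mul1r.
rewrite [rp _.+1]/=.
rewrite derivnB derivnMn -derivSn derivn_poly0; last exact: leq_trans (size_rp n) _.
have -> : rp n * 'X = rp n * 'X + 0%:P by rewrite addr0.
rewrite derivnMXaddC (derivn_poly0 (size_rp n)) mul0r addr0 IH sub0r.
rewrite -[_%:P *+ n.+1]polyCMn -[_%:P *+ 2]polyCMn -polyCN; apply: congr1.
rewrite factS natrM exprS; ring.
Qed.

Definition dg (n : nat) (t : R) := (rp n).[t] * expR (- t ^+ 2).

Lemma derive1n_gauss n : derive1n n (fun s : R => expR (- s ^+ 2)) = dg n.
Proof.
elim: n => [|n IH].
  by apply/funext => t; rewrite /dg /= hornerC mul1r.
rewrite derive1nS IH; apply/funext => t.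
rewrite derive1E /dg.
have H := is_derive_pg (rp n) t.
by rewrite derive_val.
Qed.

Lemma hermiteHE n t : hermiteH n t = ((-1) ^+ n *: rp n).[t].
Proof.
rewrite /hermiteH derive1n_gauss /dg hornerZ.
have e : expR (t ^+ 2) * expR (- t ^+ 2) = 1 by rewrite -expRD subrr expR0.
transitivity ((-1) ^+ n * (rp n).[t] * (expR (t ^+ 2) * expR (- t ^+ 2))); first ring.
by rewrite e mulr1.
Qed.

End S.
Section S2.
Context {R : realType}.
Local Open Scope classical_set_scope.
Local Notation mu := (@lebesgue_measure R).

Definition ak (k : nat) : R := k.+1%:R.
Definition Dk (k : nat) : set R := `[- ak k, ak k]%classic.

Lemma ak_gt0 k : 0 < ak k. Proof. by rewrite /ak ltr0n. Qed.
Lemma ak_lt k : - ak k < ak k.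
Proof. by have := ak_gt0 k; lra. Qed.

Lemma cint (f : R -> R) k : continuous f -> mu.-integrable (Dk k) (EFin \o f).
Proof.
move=> cf; apply: continuous_compact_integrable; first exact: segment_compact.
exact: continuous_subspaceT.
Qed.

Lemma der_cont (f : R -> R) : (forall x, derivable f x 1) -> continuous f.
Proof.
by move=> df x; apply: differentiable_continuous; apply/derivable1_diffP.
Qed.

Lemma dLR (f : R -> R) a b : (forall x, derivable f x 1) ->
  derivable_oo_LRcontinuous f a b.
Proof.
move=> df; have cf := @der_cont f df; split.
- by move=> x _; exact: df.
- exact/cvg_at_right_filter/cf.
- exact/cvg_at_left_filter/cf.
Qed.

Lemma derivable_dg n (x : R) : derivable (@dg R n) x 1.
Proof. by have [] := is_derive_pg (@rp R n) x. Qed.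

Lemma continuous_dg n : continuous (@dg R n).
Proof. exact: (@der_cont (dg n) (@derivable_dg n)). Qed.

Lemma ibp (q : {poly R}) n k :
  \int[mu]_(x in Dk k) (q.[x] * dg n.+1 x) =
  (q.[ak k] * dg n (ak k) - q.[- ak k] * dg n (- ak k)) -
  \int[mu]_(x in Dk k) (q^`().[x] * dg n x).
Proof.
apply: (@Rintegration_by_parts R (horner q) (dg n) (horner q^`()) (dg n.+1)).
- exact: ak_lt.
- exact/continuous_subspaceT/continuous_horner.
- by apply: dLR => x; exact: derivable_horner.
- by move=> x _; rewrite derivE.
- exact/continuous_subspaceT/continuous_dg.
- by apply: dLR => x; exact: derivable_dg.
- move=> x _; rewrite derive1E.
  have H := is_derive_pg (rp n) x.
  by rewrite /dg derive_val.
Qed.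

End S2.
Section S3.
Context {R : realType}.
Local Open Scope classical_set_scope.

Definition psum (p : {poly R}) : R := \sum_(i < size p) `|p`_i|.

Lemma norm_le_sq (x : R) : `|x| <= 1 + x ^+ 2.
Proof.
have h : `|x| ^+ 2 = x ^+ 2 by rewrite real_normK ?num_real.
have := normr_ge0 x; nra.
Qed.

Lemma poly_bound (p : {poly R}) (x : R) :
  `|p.[x]| <= psum p * (1 + x ^+ 2) ^+ size p.
Proof.
rewrite horner_coef /psum mulr_suml.
apply: le_trans (ler_norm_sum _ _ _) _; apply: ler_sum => i _.
rewrite normrM normrX; apply: ler_wpM2l; first exact: normr_ge0.
have y1 : 1 <= 1 + x ^+ 2 by rewrite lerDl sqr_ge0.
apply: le_trans (ler_weXn2l y1 (ltnW (ltn_ord i))).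
apply: lerXn2r; rewrite ?nnegrE ?normr_ge0 ?norm_le_sq //.
exact: le_trans ler01 y1.
Qed.

Lemma gauss_bound (p : {poly R}) (x : R) :
  `|p.[x] * expR (- x ^+ 2)| <=
    psum p * (size p).+1`!%:R * expR 1 / (1 + x ^+ 2).
Proof.
set y := 1 + x ^+ 2; set m := size p.
have y1 : 1 <= y by rewrite lerDl sqr_ge0.
have y0 : 0 < y by apply: lt_le_trans y1.
have ey : expR (- x ^+ 2) = expR 1 / expR y.
  by rewrite -expRB /y opprD addrA subrr add0r.
have key : y ^+ m.+1 <= m.+1`!%:R * expR y.
  have F0 : 0 < (m.+1)`!%:R :> R by rewrite ltr0n fact_gt0.
  have := expR_ge1Dxn m (ltW y0) => h.
  have h2 : y ^+ m.+1 / (m.+1)`!%:R <= expR y by lra.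
  by rewrite ler_pdivrMr // mulrC in h2.
have S0 : 0 <= psum p by rewrite /psum sumr_ge0 // => i _; exact: normr_ge0.
have eP : 0 < expR y := expR_gt0 y.
have e1 : 0 <= expR 1 :> R := expR_ge0 1.
rewrite normrM (ger0_norm (expR_ge0 _)) ey.
apply: le_trans (_ : psum p * y ^+ m * (expR 1 / expR y) <= _).
  by apply: ler_wpM2r; [rewrite divr_ge0 // ltW | exact: poly_bound].
have -> : psum p * y ^+ m * (expR 1 / expR y) = (psum p * expR 1) * (y ^+ m.+1 / (y * expR y)).
  rewrite exprS; field; apply/andP; split; apply: lt0r_neq0 => //.
have -> : psum p * (m.+1)`!%:R * expR 1 / y = (psum p * expR 1) * ((m.+1)`!%:R * expR y / (y * expR y)).
  field; apply/andP; split; apply: lt0r_neq0 => //.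
apply: ler_wpM2l; first exact: mulr_ge0.
apply: ler_wpM2r => //; rewrite invr_ge0 ltW // mulr_gt0 //.
Qed.
End S3.
Section S4.
Context {R : realType}.
Local Open Scope classical_set_scope.

Lemma decay (p : {poly R}) (x : nat -> R) : (forall k, ak k <= `|x k|) ->
  (fun k => p.[x k] * expR (- x k ^+ 2)) @ \oo --> 0.
Proof.
move=> hx.
set C := psum p * (size p).+1`!%:R * expR 1.
have C0 : 0 <= C.
  rewrite /C mulr_ge0 ?expR_ge0 // mulr_ge0 //.
  by rewrite /psum sumr_ge0 // => i _; exact: normr_ge0.
have hc : (fun k => C * harmonic k) @ \oo --> (0 : R).
  by rewrite -(mulr0 C); apply: cvgM; [exact: cvg_cst | exact: cvg_harmonic].
have hcN : (fun k => - (C * harmonic k)) @ \oo --> (0 : R).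
  by rewrite -oppr0; apply: cvgN.
apply: (squeeze_cvgr _ hcN hc); apply: nearW => k.
have hb : `|p.[x k] * expR (- x k ^+ 2)| <= C * harmonic k.
  apply: le_trans (gauss_bound p (x k)) _.
  rewrite /harmonic /= -/C; apply: ler_wpM2l => //.
  have a1 : 1 <= @ak R k by rewrite /ak ler1n.
  have ax := hx k.
  have h2 : `|x k| ^+ 2 = x k ^+ 2 by rewrite real_normK ?num_real.
  rewrite lef_pV2 ?posrE ?ltr0n //; last by rewrite (lt_le_trans ltr01) // lerDl sqr_ge0.
  rewrite -/(ak k); nra.
by rewrite -ler_norml.
Qed.
End S4.
Section S5.
Context {R : realType}.
Local Open Scope classical_set_scope.
Local Notation mu := (@lebesgue_measure R).

Lemma bd_cvg (q : {poly R}) n :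
  (fun k => q.[ak k] * dg n (ak k) - q.[- ak k] * dg n (- ak k)) @ \oo --> (0 : R).
Proof.
have e : forall x : R, q.[x] * dg n x = (q * rp n).[x] * expR (- x ^+ 2).
  by move=> x; rewrite /dg hornerM mulrA.
under eq_fun do rewrite !e.
rewrite -(subr0 0); apply: cvgB.
- apply: (decay (q * rp n) (fun k => ak k)) => k.
  by rewrite ger0_norm // ltW // ak_gt0.
- apply: (decay (q * rp n) (fun k => - ak k)) => k.
  by rewrite normrN ger0_norm // ltW // ak_gt0.
Qed.

Lemma lim_L n : forall (q : {poly R}) (l : R),
  (fun k => \int[mu]_(x in Dk k) ((q^`(n)).[x] * expR (- x ^+ 2))) @ \oo --> l ->
  (fun k => \int[mu]_(x in Dk k) (q.[x] * dg n x)) @ \oo --> (-1) ^+ n * l.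
Proof.
elim: n => [|n IH] q l h.
  rewrite expr0 mul1r.
  have -> : (fun x => q.[x] * dg 0 x) = (fun x => (q^`(0)).[x] * expR (- x ^+ 2)).
    by apply/funext => x; rewrite derivn0 /dg /= hornerC mul1r.
  exact: h.
under eq_fun do rewrite ibp.
have h' : (fun k => \int[mu]_(x in Dk k) (((q^`())^`(n)).[x] * expR (- x ^+ 2))) @ \oo --> l.
  by under eq_fun do rewrite -derivSn.
have := IH _ _ h'.
move=> H; rewrite exprS mulN1r mulNr -(sub0r ((-1) ^+ n * l)).
exact: cvgB (bd_cvg q n) H.
Qed.
End S5.
Section S6.
Context {R : realType}.
Local Open Scope classical_set_scope.
Local Notation mu := (@lebesgue_measure R).

Lemma Dk_measurable k : measurable (@Dk R k).
Proof. exact: measurable_itv. Qed.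

Lemma Dk_nd : {homo (@Dk R) : n m / (n <= m)%N >-> (n <= m)%O}.
Proof.
move=> n m nm; rewrite /Dk; apply/subsetPset => x /=; rewrite !in_itv /= => /andP[h1 h2].
have : @ak R n <= ak m by rewrite /ak ler_nat.
move=> h; apply/andP; split; lra.
Qed.

Lemma Dk_bigcup : \bigcup_k (@Dk R k) = setT.
Proof.
apply/seteqP; split => // x _.
have [k hk] : exists k : nat, `|x| < k.+1%:R.
  exists (Num.trunc `|x|); exact: truncnS_gt.
exists k => //=; rewrite /Dk /= in_itv /= /ak.
move/ltr_normlP: hk => [h1 h2]; apply/andP; split; lra.
Qed.

Lemma cvg_int_gauss :
  (fun k => \int[mu]_(x in Dk k) expR (- x ^+ 2)) @ \oo --> Num.sqrt pi.
Proof.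
have h := @ge0_nondecreasing_set_cvg_integral _ (measurableTypeR R) R (@Dk R)
  (fun x => (gauss_fun x)%:E) lebesgue_measure Dk_nd Dk_measurable.
have : (fun k => (\int[mu]_(x in Dk k) (gauss_fun x)%:E)%E) @ \oo --> (Num.sqrt pi)%:E.
  rewrite -integralT_gauss -Dk_bigcup; apply: h.
  - by move=> k; apply/measurable_EFinP; exact: measurable_funTS measurable_gauss_fun.

  - by move=> k x _; rewrite lee_fin gauss_fun_ge0.
move/fine_cvg => H; exact: H.
Qed.

End S6.
Section S7.
Context {R : realType}.
Local Open Scope classical_set_scope.
Local Notation mu := (@lebesgue_measure R).

Lemma cont_pg (p : {poly R}) : continuous (fun x : R => p.[x] * expR (- x ^+ 2)).
Proof.
apply: der_cont => x; by have [] := is_derive_pg p x.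
Qed.

Lemma cont_xg m : continuous (fun x : R => x ^+ m * expR (- x ^+ 2)).
Proof.
have -> : (fun x : R => x ^+ m * expR (- x ^+ 2)) = (fun x => ('X^m).[x] * expR (- x ^+ 2)).
  by apply/funext => x; rewrite hornerXn.
exact: cont_pg.
Qed.

Lemma intZl (f : R -> R) (c : R) k : continuous f ->
  \int[mu]_(x in Dk k) (c * f x) = c * \int[mu]_(x in Dk k) f x.
Proof. by move=> cf; rewrite RintegralZl //; [exact: Dk_measurable | exact: cint]. Qed.

Lemma hermite_norm_cvg n :
  (fun k => \int[mu]_(x in Dk k) ((rp n).[x] * dg n x)) @ \oo -->
    (2 ^+ n * n`!%:R * Num.sqrt pi : R).
Proof.
have h : (fun k => \int[mu]_(x in Dk k) (((rp n)^`(n)).[x] * expR (- x ^+ 2))) @ \oo -->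
    ((-2) ^+ n * n`!%:R * Num.sqrt pi : R).
  rewrite derivn_rp.
  have -> : (fun k => \int[mu]_(x in Dk k) (((-2) ^+ n * n`!%:R)%:P.[x] * expR (- x ^+ 2))) =
      (fun k => \int[mu]_(x in Dk k) (((-2) ^+ n * n`!%:R) * expR (- x ^+ 2))).
    by apply/funext => k; apply: eq_Rintegral => x _; rewrite hornerC.
  have -> : (fun k => \int[mu]_(x in Dk k) (((-2) ^+ n * n`!%:R) * expR (- x ^+ 2))) =
      (fun k => ((-2) ^+ n * n`!%:R) * \int[mu]_(x in Dk k) (expR (- x ^+ 2))).
    by apply/funext => k; rewrite intZl //; exact: continuous_gauss_fun.
  by apply: cvgM; [exact: cvg_cst | exact: cvg_int_gauss].
have := lim_L n (rp n) _ h.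
by rewrite !mulrA -exprMn mulN1r opprK.
Qed.

End S7.
Section S8.
Context {R : realType}.
Local Open Scope classical_set_scope.
Local Notation mu := (@lebesgue_measure R).

Fixpoint mj (j : nat) : R := if j is i.+1 then (i.*2.+1)%:R / 2 * mj i else 1.

Definition mom j k := \int[mu]_(x in Dk k) (x ^+ j.*2 * expR (- x ^+ 2)).

Lemma int_gauss_le k : \int[mu]_(x in Dk k) (expR (- x ^+ 2)) <= Num.sqrt pi.
Proof.
have fin : (\int[mu]_(x in Dk k) (expR (- x ^+ 2))%:E)%E \is a fin_num.
  apply: integrable_fin_num; first exact: Dk_measurable.
  exact: cint continuous_gauss_fun.
rewrite -lee_fin /Rintegral fineK // -integralT_gauss.
apply: ge0_subset_integral => //; first exact: Dk_measurable.
by apply/measurable_EFinP; exact: measurable_gauss_fun.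
Qed.

Lemma rp1 (x : R) : (rp 1).[x] = - (x + x).
Proof. by rewrite /= derivC !hornerE. Qed.

Lemma dg0 (x : R) : dg 0 x = expR (- x ^+ 2).
Proof. by rewrite /dg [rp 0]/= hornerC mul1r. Qed.

Lemma mom_step j k :
  - 2 * mom j.+1 k =
  2 * (ak k ^+ j.*2.+1 * expR (- ak k ^+ 2)) - (j.*2.+1)%:R * mom j k.
Proof.
have := @ibp R ('X^(j.*2.+1)) 0 k.
have e1 : \int[mu]_(x in Dk k) (('X^(j.*2.+1)).[x] * dg 1 x) = - 2 * mom j.+1 k.
  rewrite /mom -intZl; last exact: cont_xg.
  apply: eq_Rintegral => x _; rewrite /dg rp1 hornerXn.
  have key : forall y e : R, y ^+ j.*2.+1 * (- (y + y) * e) = - 2 * (y ^+ (j.+1).*2 * e).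
    by move=> y e; rewrite doubleS !exprS; ring.
  exact: key.
have e2 : \int[mu]_(x in Dk k) ((('X^(j.*2.+1))^`()).[x] * dg 0 x) = (j.*2.+1)%:R * mom j k.
  rewrite /mom -intZl; last exact: cont_xg.
  apply: eq_Rintegral => x _; rewrite dg0 derivXn /= hornerMn hornerXn.
  by rewrite -mulr_natl mulrA.
have e3 : forall a : R, ('X^(j.*2.+1)).[a] * dg 0 a - ('X^(j.*2.+1)).[- a] * dg 0 (- a) =
    2 * (a ^+ j.*2.+1 * expR (- a ^+ 2)).
  move=> a; rewrite !dg0 !hornerXn sqrrN exprNn -signr_odd /= odd_double /=.
  ring.
move=> H; rewrite -e1 -e2 -(e3 (ak k)).
exact: H.
Qed.
End S8.
Section S9.
Context {R : realType}.
Local Open Scope classical_set_scope.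
Local Notation mu := (@lebesgue_measure R).

Lemma mom_le j k : mom j k <= mj j * Num.sqrt pi :> R.
Proof.
elim: j => [|j IH].
  rewrite /mom /= mul1r.
  have -> : \int[mu]_(x in Dk k) (x ^+ 0 * expR (- x ^+ 2)) = \int[mu]_(x in Dk k) (expR (- x ^+ 2)).
    by apply: eq_Rintegral => x _; rewrite expr0 mul1r.
  exact: int_gauss_le.
have st := @mom_step R j k.
have b0 : 0 <= ak k ^+ j.*2.+1 * expR (- ak k ^+ 2) :> R.
  by rewrite mulr_ge0 ?expR_ge0 // exprn_ge0 // ltW // ak_gt0.
have c0 : 0 <= (j.*2.+1)%:R :> R by [].
have h1 : (j.*2.+1)%:R * mom j k <= (j.*2.+1)%:R * (mj j * Num.sqrt pi) :> R.
  exact: ler_wpM2l.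
have E : mj j.+1 * Num.sqrt pi = ((j.*2.+1)%:R * (mj j * Num.sqrt pi)) / 2 :> R.
  by rewrite /=; ring.
rewrite E.
move: st h1 b0; set P := _ * (mj j * _); set Q := _ * mom j k; set b := ak k ^+ _ * _.
move=> st h1 b0; lra.
Qed.

End S9.
Section S10.
Context {R : realType}.

Lemma mj_gt0 j : 0 < @mj R j.
Proof.
elim: j => [|j IH] /=; first exact: ltr01.
by rewrite mulr_gt0 // divr_gt0 // ltr0n.
Qed.

Lemma mj_le j : (0 < j)%N -> @mj R j <= j`!%:R / 2.
Proof.
elim: j => [//|j IH] _.
case: j IH => [|j] IH; first by rewrite /= mulr1 mul1r.
have := IH isT => h.
rewrite [mj _]/= factS natrM.
have hj : 0 <= ((j.+1).*2.+1)%:R / 2 :> R by rewrite divr_ge0.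
apply: le_trans (ler_wpM2l hj h) _.
have e : ((j.+1).*2.+1)%:R = (j.+1)%:R * 2 + 1 :> R.
  by rewrite -[_.*2.+1]addn1 -muln2 natrD natrM.
rewrite e.
have F0 : 0 <= (j.+1)`!%:R :> R by [].
set a := (j.+1)%:R; set b := (j.+1)`!%:R.
have a0 : 0 <= a by [].
rewrite -[(j.+2)%:R]natr1 -/a.
have b0 : 0 <= b by [].
nra.
Qed.

End S10.
Section S11.
Context {R : realType}.

Lemma sqrtpi_le2 : Num.sqrt (pi : R) <= 2.
Proof.
have h : (pi : R) <= 2 ^+ 2 by have := @pihalf_lt2 R; lra.
by rewrite -(ler_sqrt _ (sqr_ge0 2)) in h; rewrite sqrtr_sqr ger0_norm // in h.
Qed.

Lemma amgm (u v w l : R) : 0 < l -> 0 <= w ->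
  u * v * w <= (l * (u ^+ 2 * w) + (v ^+ 2 * w) / l) / 2.
Proof.
move=> l0 w0; rewrite -subr_ge0.
have -> : (l * (u ^+ 2 * w) + v ^+ 2 * w / l) / 2 - u * v * w =
          (l * u - v) ^+ 2 * w / (2 * l).
  by field; rewrite lt0r_neq0.
apply: divr_ge0; first by apply: mulr_ge0 => //; exact: sqr_ge0.
by apply: mulr_ge0 => //; exact: ltW.
Qed.

Lemma final_alg (A B M D : R) : 0 < A -> 0 < M -> 0 < D -> A * B <= M ^+ 2 ->
  (M / A) / (2 * D) * A + 1 / ((M / A) * (2 * D)) * B <= M / D.
Proof.
move=> A0 M0 D0 AB.
have -> : (M / A) / (2 * D) * A + 1 / ((M / A) * (2 * D)) * B = (M ^+ 2 + A * B) / (2 * D * M).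
  by field; rewrite !lt0r_neq0.
rewrite ler_pdivrMr ?mulr_gt0 //.
have -> : M / D * (2 * D * M) = 2 * M ^+ 2 by field; rewrite lt0r_neq0.
lra.
Qed.
End S11.
Section S12.
Context {R : realType}.

Lemma cmul (a b : R -> R) : continuous a -> continuous b -> continuous (fun t => a t * b t).
Proof. by move=> ca cb x; exact: (@continuousM _ _ a b x (ca x) (cb x)). Qed.

Lemma cadd (a b : R -> R) : continuous a -> continuous b -> continuous (fun t => a t + b t).
Proof. by move=> ca cb x; exact: (@continuousD _ _ _ a b x (ca x) (cb x)). Qed.

Lemma ccst (r : R) : continuous (fun _ : R => r).
Proof. by move=> x; exact: cvg_cst. Qed.

Lemma cnormX m : continuous (fun t : R => `|t| ^+ m).
Proof.
move=> x; apply: (@continuous_comp _ _ _ (fun t : R => `|t|) (fun t : R => t ^+ m)).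
  exact: norm_continuous.
exact: exprn_continuous.
Qed.

Lemma cnorm (a : R -> R) : continuous a -> continuous (fun t => `|a t|).
Proof.
move=> ca x; apply: (@continuous_comp _ _ _ a (fun t : R => `|t|)); first exact: ca.
exact: norm_continuous.
Qed.

End S12.
Theorem proposition3p1 (R : realType) (n i : nat) :
  (0 < n)%N -> (0 < i)%N ->
  (\int[@lebesgue_measure R]_(t in [set: R])
      ((`|t| ^+ i / i`!%:R) * `|hermite_fun n t|)%:E
   <= (1 / Num.sqrt (2 ^+ n * n`!%:R * i`!%:R * Num.sqrt pi))%:E)%E.
Proof.
move=> n0 i0.
pose s := Num.sqrt (pi : R).
pose K := 2 ^+ n * n`!%:R : R.
pose f := i`!%:R : R.
pose T := 1 / Num.sqrt (K * f * s).
have s0 : 0 < s by rewrite sqrtr_gt0 pi_gt0.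
have ss : s ^+ 2 = pi by rewrite sqr_sqrtr // pi_ge0.
have K0 : 0 < K by rewrite mulr_gt0 // ?exprn_gt0 // ltr0n fact_gt0.
have f0 : 0 < f by rewrite ltr0n fact_gt0.
have X0 : 0 < K * f * s by rewrite !mulr_gt0.
have T0 : 0 < T by rewrite divr_gt0 // sqrtr_gt0.
have TT : T ^+ 2 = 1 / (K * f * s).
  by rewrite expr_div_n expr1n sqr_sqrtr // ltW.
pose c := K * s. pose D := f * c. pose M := D * T.
pose A := mj i * s. pose B := K * s.
have A0 : 0 < A by rewrite mulr_gt0 // mj_gt0.
have D0 : 0 < D by rewrite !mulr_gt0.
have M0 : 0 < M by rewrite mulr_gt0.
have AB : A * B <= M ^+ 2.
  have -> : M ^+ 2 = f * K * s.
    rewrite /M /D /c exprMn TT; field.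
    by apply/and3P; split; rewrite lt0r_neq0.
  have h1 : mj i * s <= f.
    have := @mj_le R i i0; have := sqrtpi_le2 (R:=R); have := mj_gt0 (R:=R) i.
    rewrite -/s -/f => m0 sl ml; nra.
  rewrite /A /B.
  have -> : mj i * s * (K * s) = (mj i * s) * K * s by ring.
  by rewrite ler_pM2r // ler_pM2r.
pose l := M / A. pose al := l / (2 * D). pose be := 1 / (l * (2 * D)).
have l0 : 0 < l by rewrite divr_gt0.
have D20 : 0 < 2 * D by rewrite mulr_gt0.
have al0 : 0 <= al by apply: divr_ge0; apply: ltW.
have be0 : 0 <= be by apply: divr_ge0 => //; apply: ltW; apply: mulr_gt0.
have hfE : hermite_fun n = fun t => (rp n).[t] * expR (- t ^+ 2) * ((-1) ^+ n / c).
  apply/funext => t; rewrite /hermite_fun hermiteHE hornerZ /c /K /s.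
  ring.
pose F := fun t : R => `|t| ^+ i / i`!%:R * `|hermite_fun n t|.
have Fcont : continuous F.
  rewrite /F hfE; apply: cmul; first by apply: cmul; [exact: cnormX | exact: ccst].
  by apply: cnorm; apply: cmul; [exact: cont_pg | exact: ccst].
have Fle : forall t, F t <= al * (t ^+ i.*2 * expR (- t ^+ 2)) + be * ((rp n).[t] * dg n t).
  move=> t; rewrite /F hfE.
  have c0 : 0 < c by rewrite mulr_gt0.
  have nr : `|(rp n).[t] * expR (- t ^+ 2) * ((-1) ^+ n / c)| = `|(rp n).[t]| * expR (- t ^+ 2) / c.
    rewrite !normrM (ger0_norm (expR_ge0 _)) normrX normrN1 expr1n mul1r normrV ?unitf_gt0 //.
    by rewrite (ger0_norm (ltW c0)).
  have u2 : (`|t| ^+ i) ^+ 2 = t ^+ i.*2.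
    by rewrite -exprM mulnC exprM real_normK ?num_real // -exprM mul2n.
  have v2 : `|(rp n).[t]| ^+ 2 = (rp n).[t] ^+ 2 by rewrite real_normK ?num_real.
  have eL : `|t| ^+ i / i`!%:R * `|(rp n).[t] * expR (- t ^+ 2) * ((-1) ^+ n / c)| =
      `|t| ^+ i * `|(rp n).[t]| * (expR (- t ^+ 2) / D).
    rewrite nr /D -/f; field.
    by apply/andP; split; rewrite lt0r_neq0.
  have eR : al * (t ^+ i.*2 * expR (- t ^+ 2)) + be * ((rp n).[t] * dg n t) =
      (l * ((`|t| ^+ i) ^+ 2 * (expR (- t ^+ 2) / D)) + `|(rp n).[t]| ^+ 2 * (expR (- t ^+ 2) / D) / l) / 2.
    rewrite u2 v2 /al /be /dg; field.
    by apply/andP; split; rewrite lt0r_neq0.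
  rewrite eL eR; apply: amgm => //.
  by apply: divr_ge0; [exact: expR_ge0 | exact: ltW].
pose Bk := fun k => \int[lebesgue_measure]_(x in @Dk R k) ((rp n).[x] * dg n x).
have crd : continuous (fun x : R => (rp n).[x] * dg n x).
  by apply: cmul; [exact: continuous_horner | exact: continuous_dg].
have cxg := @cont_xg R i.*2.
have rk : forall k, \int[lebesgue_measure]_(t in Dk k) F t <= al * A + be * Bk k.
  move=> k.
  have mD := @Dk_measurable R k.
  apply: le_trans (_ : \int[lebesgue_measure]_(t in Dk k)
      (al * (t ^+ i.*2 * expR (- t ^+ 2)) + be * ((rp n).[t] * dg n t)) <= _).
    apply: le_Rintegral => //; first exact: cint.
    apply: cint; apply: cadd; apply: cmul => //; exact: ccst.
  rewrite RintegralD //; last 2 first.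
  - by apply: cint; apply: cmul => //; exact: ccst.
  - by apply: cint; apply: cmul => //; exact: ccst.
  rewrite intZl // intZl //.
  apply: lerD; last by [].
  by apply: ler_wpM2l => //; exact: mom_le.
have cvr : ((fun k => al * A + be * Bk k) @ \oo --> al * A + be * B)%classic.
  apply: cvgD; first exact: cvg_cst.
  apply: cvgM; first exact: cvg_cst.
  exact: hermite_norm_cvg.
have fin : al * A + be * B <= T.
  have := final_alg _ _ _ _ A0 M0 D0 AB.
  have -> : M / D = T by rewrite /M; field; rewrite lt0r_neq0.
  by [].
have intk : forall k, (\int[lebesgue_measure]_(t in @Dk R k) (F t)%:E)%E =
    (\int[lebesgue_measure]_(t in Dk k) F t)%:E.
  move=> k; rewrite /Rintegral fineK //; apply: integrable_fin_num.
    exact: Dk_measurable.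
  exact: cint.
have F0 : forall t, 0 <= F t.
  by move=> t; rewrite /F mulr_ge0 // divr_ge0 // exprn_ge0.
have cvF : ((fun k => (\int[lebesgue_measure]_(t in @Dk R k) (F t)%:E)%E) @ \oo -->
    (\int[lebesgue_measure]_(t in [set: R]) (F t)%:E)%E)%classic.
  rewrite -(@Dk_bigcup R).
  apply: (@ge0_nondecreasing_set_cvg_integral _ (measurableTypeR R) R (@Dk R)
    (fun t => (F t)%:E) lebesgue_measure Dk_nd Dk_measurable).
  - move=> k; apply/measurable_EFinP; apply: measurable_funTS.
    exact: continuous_measurable_fun.
  - by move=> k t _; rewrite lee_fin.
have cvrE : ((fun k => (al * A + be * Bk k)%:E) @ \oo --> (al * A + be * B)%:E)%classic.
  by apply: cvg_EFin; [exact: nearW | exact: cvr].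
change ((\int[lebesgue_measure]_(t in [set: R]) (F t)%:E)%E <= T%:E)%E.
rewrite -(cvg_lim _ cvF) //.
apply: le_trans (_ : lim ((fun k => (al * A + be * Bk k)%:E) @ \oo)%classic <= _)%E.
  apply: lee_lim.
  - by apply/cvg_ex; eexists; exact: cvF.
  - by apply/cvg_ex; eexists; exact: cvrE.
  - by apply: nearW => k; rewrite intk lee_fin.
by rewrite (cvg_lim _ cvrE) // lee_fin.
Qed.
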